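(* For integers $p\ge1$ and $0\le k\le n$, and all $x$, \[ \sum_{j=0}^{n-k}\binom{n-k}{j}(-1)^{j}E_{j+k}^{(p)}(x)=(-1)^{n+k+1}\sum_{j=0}^{k}\binom{k}{j}E_{n-j}^{(p)}(x)+2(-1)^{n+k}\sum_{j=0}^{k}\binom{k}{j}E_{n-j}^{(p-1)}(x-1). \]
   Context: For $p\ge0$, the higher-order Euler polynomials $E_n^{(p)}(x)$ are defined by $\sum_{n\ge0}E_n^{(p)}(x)\frac{t^n}{n!}=e^{xt}\left(\frac{2}{e^t+1}\right)^p$; in particular $E_n^{(0)}(x)=x^n$. *)

(* Defs.v *)
From HB Require Import structures.
From mathcomp Require Import all_boot all_order all_algebra.
Set Implicit Arguments. Unset Strict Implicit. Unset Printing Implicit Defensive.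
Import Order.TTheory GRing.Theory Num.Theory.
Local Open Scope ring_scope.

Definition fps (R : numFieldType) := nat -> R.

Definition fps_mul (R : numFieldType) (f g : fps R) : fps R :=
  fun n => \sum_(i < n.+1) f i * g (n - i)%N.

Definition fps_one (R : numFieldType) : fps R := fun n => (n == 0%N)%:R.

Definition fps_pow (R : numFieldType) (f : fps R) (p : nat) : fps R :=
  iter p (fps_mul f) (@fps_one R).

Definition fps_exp (R : numFieldType) (a : R) : fps R :=
  fun n => a ^+ n / (n`!)%:R.

(* multiplicative inverse of a series with nonzero constant term:
   b_0 = 1/f_0,  b_{n+1} = -(1/f_0) sum_{k=1}^{n+1} f_k b_{n+1-k} *)
Fixpoint fps_inv_aux (R : numFieldType) (f : fps R) (n : nat) : seq R :=
  match n with
  | 0 => [:: (f 0%N)^-1]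
  | m.+1 => let s := fps_inv_aux f m in
      rcons s (- (f 0%N)^-1 * \sum_(k < m.+1) f k.+1 * nth 0 s (m - k)%N)
  end.

Definition fps_inv (R : numFieldType) (f : fps R) : fps R :=
  fun n => nth 0 (fps_inv_aux f n) n.

Definition euler_gf (R : numFieldType) : fps R :=
  fun n => 2 * fps_inv (fun m => fps_exp 1 m + fps_one R m) n.

(* Higher-order Euler polynomial E_n^{(p)}(x):
   sum_n E_n^{(p)}(x) t^n/n! = e^{xt} (2/(e^t+1))^p *)
Definition eulerP (R : numFieldType) (p n : nat) (x : R) : R :=
  (n`!)%:R * fps_mul (fps_exp x) (fps_pow (@euler_gf R) p) n.

(* Main.v *)
Require Import Defs.
From HB Require Import structures.
From mathcomp Require Import all_boot all_order all_algebra.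
From mathcomp Require Import ring.
From Stdlib Require Import FunctionalExtensionality.
Import Order.TTheory GRing.Theory Num.Theory.
Local Open Scope ring_scope.

Section Fps.
Variable R : numFieldType.
Implicit Types f g h : fps R.

Definition PP (N : nat) f : {poly R} := \poly_(i < N) f i.

Lemma fps_mulE N f g j : (j < N)%N -> (PP N f * PP N g)`_j = fps_mul f g j.
Proof.
move=> hj; rewrite coefM /fps_mul; apply: eq_bigr => i _.
rewrite !coef_poly.
have hi : (i < N)%N by apply: leq_trans (ltn_ord i) hj.
have hji : (j - i < N)%N by apply: leq_ltn_trans (leq_subr i j) hj.
by rewrite hi hji.
Qed.

Lemma coef_mul_eqr (p q r : {poly R}) n :
  (forall j, (j <= n)%N -> p`_j = q`_j) -> (r * p)`_n = (r * q)`_n.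
Proof. by move=> H; rewrite !coefM; apply: eq_bigr => i _; rewrite H // leq_subr. Qed.

Lemma coef_mul_eql (p q r : {poly R}) n :
  (forall j, (j <= n)%N -> p`_j = q`_j) -> (p * r)`_n = (q * r)`_n.
Proof. by move=> H; rewrite !coefM; apply: eq_bigr => i _; rewrite H // -ltnS. Qed.

Lemma mulC f g n : fps_mul f g n = fps_mul g f n.
Proof. by rewrite -!(fps_mulE _ _ _ _ (ltnSn n)) mulrC. Qed.

Lemma PPmul f g n j : (j <= n)%N ->
  (PP n.+1 (fps_mul f g))`_j = (PP n.+1 f * PP n.+1 g)`_j.
Proof. by move=> hj; rewrite coef_poly ltnS hj fps_mulE. Qed.

Lemma mulA f g h n : fps_mul f (fps_mul g h) n = fps_mul (fps_mul f g) h n.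
Proof.
rewrite -!(fps_mulE _ _ _ _ (ltnSn n)).
rewrite (coef_mul_eqr (PP n.+1 (fps_mul g h)) (PP n.+1 g * PP n.+1 h)); last by move=> j hj; rewrite PPmul.
rewrite (coef_mul_eql (PP n.+1 (fps_mul f g)) (PP n.+1 f * PP n.+1 g));
  last by move=> j hj; rewrite PPmul.
by rewrite mulrA.
Qed.

Lemma mulAf f g h : fps_mul f (fps_mul g h) = fps_mul (fps_mul f g) h.
Proof. by apply: functional_extensionality => n; apply: mulA. Qed.

Lemma mulCf f g : fps_mul f g = fps_mul g f.
Proof. by apply: functional_extensionality => n; apply: mulC. Qed.

Lemma mul1 f n : fps_mul (@fps_one R) f n = f n.
Proof.
rewrite /fps_mul big_ord_recl big1 ?addr0.
  by rewrite /fps_one /= mul1r subn0.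
by move=> i _; rewrite /fps_one lift0 /= mul0r.
Qed.

Lemma mulDl f g h n :
  fps_mul (fun m => f m + g m) h n = fps_mul f h n + fps_mul g h n.
Proof. by rewrite /fps_mul -big_split; apply: eq_bigr => i _; rewrite mulrDl. Qed.

Lemma mulZl (c : R) f h n :
  fps_mul (fun m => c * f m) h n = c * fps_mul f h n.
Proof. by rewrite /fps_mul mulr_sumr; apply: eq_bigr => i _; rewrite mulrA. Qed.

Lemma size_aux f n : size (fps_inv_aux f n) = n.+1.
Proof. by elim: n => //= n IH; rewrite size_rcons IH. Qed.

Lemma aux_prefix f n m j : (j <= n)%N ->
  nth 0 (fps_inv_aux f (n + m)) j = nth 0 (fps_inv_aux f n) j.
Proof.
move=> hj; elim: m => [|m IH]; first by rewrite addn0.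
rewrite addnS /= nth_rcons size_aux.
have -> : (j < (n + m).+1)%N by rewrite ltnS (leq_trans hj) // leq_addr.
exact: IH.
Qed.

Lemma inv_nth f n j : (j <= n)%N -> fps_inv f j = nth 0 (fps_inv_aux f n) j.
Proof. by move=> hj; rewrite /fps_inv -(subnKC hj) aux_prefix. Qed.

Lemma mul_inv f : f 0%N != 0 -> forall n, fps_mul f (fps_inv f) n = fps_one R n.
Proof.
move=> f0 [|m].
  by rewrite /fps_mul big_ord1 /fps_inv /= divff.
have E : fps_inv f m.+1 = - (f 0%N)^-1 *
    \sum_(k < m.+1) f k.+1 * nth 0 (fps_inv_aux f m) (m - k)%N.
  by rewrite /fps_inv /= nth_rcons size_aux ltnn eqxx.
rewrite /fps_mul big_ord_recl subn0 E.
set S := \sum_(k < m.+1) _.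
have -> : \sum_(i < m.+1) f (lift ord0 i) * fps_inv f (m.+1 - lift ord0 i)%N = S.
  apply: eq_bigr => i _; rewrite lift0 subSS (inv_nth f _ _ (leq_subr i m)) //.
rewrite /fps_one /= mulrA mulrN divff // mulN1r.
by rewrite addNr.
Qed.

Lemma natf_neq0 n : (0 < n)%N -> (n%:R : R) != 0.
Proof. by move=> h; rewrite pnatr_eq0 -lt0n. Qed.

Lemma binR n i : (i <= n)%N ->
  ('C(n, i))%:R = (n`!)%:R / ((i`!)%:R * ((n - i)`!)%:R) :> R.
Proof.
move=> h; rewrite -(bin_fact h) !natrM mulfK //.
by rewrite mulf_neq0 // natf_neq0 // fact_gt0.
Qed.

Lemma exp_mul (a b : R) n :
  fps_mul (fps_exp a) (fps_exp b) n = fps_exp (a + b) n.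
Proof.
rewrite /fps_mul /fps_exp addrC exprDn mulr_suml; apply: eq_bigr => i _.
have hi : (i <= n)%N by rewrite -ltnS.

rewrite -(mulr_natr (b ^+ (n - i) * a ^+ i)) binR //.
have h1 := natf_neq0 _ (fact_gt0 i).
have h2 := natf_neq0 _ (fact_gt0 (n - i)).
have h3 := natf_neq0 _ (fact_gt0 n).
by field; rewrite ?h1 ?h2 ?h3 ?mulf_neq0.
Qed.

End Fps.

Section Comb.
Variable R : numFieldType.
Variables a b : nat -> R.

Definition LL m k := \sum_(j < m.+1) ('C(m, j))%:R * (-1) ^+ j * a (j + k)%N.
Definition SS (c : nat -> R) k N := \sum_(j < k.+1) ('C(k, j))%:R * c (N - j)%N.

Lemma Lrec m k : LL m.+1 k = LL m k - LL m k.+1.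
Proof.
rewrite /LL big_ord_recl [in X in _ = X - _]big_ord_recl.
under eq_bigr => i _ do rewrite lift0 binS natrD !mulrDl.
rewrite big_split /= !bin0.
have -> : \sum_(i < m.+1) ('C(m, i))%:R * (-1) ^+ i.+1 * a (i.+1 + k)%N
   = - \sum_(j < m.+1) ('C(m, j))%:R * (-1) ^+ j * a (j + k.+1)%N.
  rewrite -sumrN; apply: eq_bigr => i _.
  by rewrite exprS addSnnS mulN1r mulrN mulNr.
rewrite big_ord_recr /= bin_small // mul0r mul0r addr0.
by rewrite addrA.
Qed.

Lemma Srec c k N : SS c k.+1 N.+1 = SS c k N + SS c k N.+1.
Proof.
rewrite /SS big_ord_recl [in X in _ = _ + X]big_ord_recl.
under eq_bigr => i _ do rewrite lift0 binS natrD !mulrDl subSS.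
rewrite big_split /= !bin0 !subn0.
rewrite big_ord_recr /= bin_small // mul0r addr0.
by rewrite [RHS]addrC -addrA.
Qed.

Hypothesis H : forall n, a n = SS b n n.

Lemma comb m : forall k, LL m k = (-1) ^+ m * SS b k (k + m).
Proof.
elim: m => [|m IH] k.
  by rewrite /LL big_ord1 bin0 expr0 !mul1r add0n addn0 H.
rewrite Lrec !IH addSn Srec addnS exprS.
set s := (-1) ^+ m.
set A := SS b k (k + m).
set B := SS b k (k + m).+1.
ring.
Qed.

End Comb.

Theorem mainTheorem10 (R : numFieldType) (p n k : nat) (x : R) :
  (1 <= p)%N -> (k <= n)%N ->
  \sum_(j < (n - k).+1) ('C(n - k, j))%:R * (-1) ^+ j * eulerP p (j + k) x =
  (-1) ^+ (n + k + 1) * \sum_(j < k.+1) ('C(k, j))%:R * eulerP p (n - j) x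
  + 2 * (-1) ^+ (n + k) * \sum_(j < k.+1) ('C(k, j))%:R * eulerP (p - 1) (n - j) (x - 1).
Proof.
case: p => [//|q] _ hkn.
have -> : (q.+1 - 1 = q)%N by rewrite subn1.
set g := euler_gf R.
have P1 : fps_pow g q.+1 = fps_mul g (fps_pow g q) by [].
have ex : fps_exp x = fps_mul (fps_exp 1) (fps_exp (x - 1)).
  by apply: functional_extensionality => m; rewrite exp_mul addrC subrK.
have HA : forall m, eulerP q.+1 m x
    = @SS R (fun j => eulerP q.+1 j (x - 1)) m m.
  move=> m; rewrite /SS /eulerP ex -mulAf {1}/fps_mul mulr_sumr.
  apply: eq_bigr => i _.
  have hi : (i <= m)%N by rewrite -ltnS.
  rewrite binR // /fps_exp expr1n.
  have h1 := natf_neq0 R _ (fact_gt0 i).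
  have h2 := natf_neq0 R _ (fact_gt0 (m - i)).
  have h3 := natf_neq0 R _ (fact_gt0 m).
  by field; rewrite ?h1 ?h2 ?h3 ?mulf_neq0.
have HB : forall m, 2 * eulerP q m (x - 1) = eulerP q.+1 m x + eulerP q.+1 m (x - 1).
  move=> m; rewrite /eulerP mulrCA -mulrDr; congr (_ * _).
  rewrite P1 ex -mulAf.
  rewrite -[X in _ = _ + X](@mul1 R (fps_mul (fps_exp (x - 1)) (fps_mul g (fps_pow g q))) m).
  rewrite -mulDl.
  have -> : fps_mul (fps_exp (x - 1)) (fps_mul g (fps_pow g q))
      = fps_mul g (fps_mul (fps_exp (x - 1)) (fps_pow g q)).
    by rewrite mulAf (@mulCf R (fps_exp (x - 1)) g) -mulAf.
  rewrite mulA.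
  have -> : fps_mul (fun m => fps_exp 1 m + fps_one R m) g = fun m => 2 * fps_one R m.
    apply: functional_extensionality => j.
    rewrite mulC /g /euler_gf mulZl mulC mul_inv //.
    rewrite /fps_exp /fps_one /= expr0 divr1.
    exact: (natf_neq0 R _ (isT : (0 < 2)%N)).
  by rewrite mulZl mul1.
have E1 := @comb R _ _ HA (n - k) k.
rewrite subnKC // in E1.
rewrite /LL /SS /= in E1.
rewrite E1.
have E2 : 2 * \sum_(j < k.+1) ('C(k, j))%:R * eulerP q (n - j) (x - 1)
   = \sum_(j < k.+1) ('C(k, j))%:R * eulerP q.+1 (n - j) x
     + \sum_(j < k.+1) ('C(k, j))%:R * eulerP q.+1 (n - j) (x - 1).
  rewrite mulr_sumr -big_split; apply: eq_bigr => i _.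
  by rewrite mulrCA HB mulrDr.
have sg : (-1) ^+ (n + k) = (-1) ^+ (n - k) :> R.
  rewrite -{1}(subnK hkn) -addnA exprD exprD -exprMn mulrNN mulr1 expr1n mulr1 //.
rewrite (mulrC 2) -mulrA E2 addn1 exprS sg.
set s := (-1) ^+ (n - k).
set A := \sum_(j < k.+1) _.
set B := \sum_(j < k.+1) _.
ring.
Qed.
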